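(* Let $X\subseteq S^1$ and $0<r\le r'<\frac12$. The (non-continuous) map $\eta:S^1\to S^1$, $\eta(y)=\frac{1+2r}{1+2r'}\,y$ for $y\in[0,1)$, maps $T_r(X)$ into $T_{r'}(X)$ and determines a simplicial map $$\eta:\mathbf{VR}_{\le}\Big(T_r(X);\tfrac{2r}{1+2r}\Big)\to\mathbf{VR}_{\le}\Big(T_{r'}(X);\tfrac{2r'}{1+2r'}\Big)$$ such that $\pi_{r'}\circ\eta=\pi_r$; that is, the square formed by $\eta$, the simplicial homotopy equivalences $\pi_r:\mathbf{VR}_{\le}(T_r(X);\frac{2r}{1+2r})\to\check{\mathbf C}_{\le}(X;r)$ and $\pi_{r'}:\mathbf{VR}_{\le}(T_{r'}(X);\frac{2r'}{1+2r'})\to\check{\mathbf C}_{\le}(X;r')$, and the inclusion $\check{\mathbf C}_{\le}(X;r)\subseteq\check{\mathbf C}_{\le}(X;r')$ commutes.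
   Context: $S^1$ is the circle of circumference $1$ with arc-length metric; points are identified with numbers in $[0,1)$, and $aX+b=\{(ax+b)\bmod1:x\in X\}$. For $0<s<\frac12$, $T_s(X)=\frac{1}{1+2s}X\cup\big(\frac{1}{1+2s}(X\cap[0,2s)_{S^1})+\frac{1}{1+2s}\big)$ and $\pi_s(y)=(1+2s)y\bmod 1$ for $y\in[0,1)$; $\pi_s$ induces a simplicial homotopy equivalence $\mathbf{VR}_{\le}(T_s(X);\frac{2s}{1+2s})\to\check{\mathbf C}_{\le}(X;s)$. $\mathbf{VR}_{\le}(Y;t)$ is the Vietoris–Rips complex on $Y$ (faces: finite subsets of diameter $\le t$), and $\check{\mathbf C}_{\le}(X;s)$ is the Čech complex on $X$ (faces: finite subsets contained in some closed arc of length $2s$, i.e. whose closed $s$-balls in $S^1$ have a common point). *)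

(* Defs.v *)
From Stdlib Require Import Reals Lra List.
Open Scope R_scope.

(* x mod 1, in [0,1).  Int_part x = floor x. *)
Definition mod1 (x : R) : R := x - IZR (Int_part x).

Definition onS1 (x : R) : Prop := 0 <= x < 1.

(* Arc-length distance on the circle of circumference 1 (for points in [0,1)). *)
Definition circ_dist (x y : R) : R := Rmin (Rabs (x - y)) (1 - Rabs (x - y)).

Definition affS1 (a b : R) (X : R -> Prop) : R -> Prop :=
  fun z => exists x, X x /\ z = mod1 (a * x + b).

(* X ∩ [0, 2s)_{S^1}  (for 0 < s < 1/2 the arc [0,2s) is {x in [0,1) | x < 2s}) *)
Definition cap_arc (s : R) (X : R -> Prop) : R -> Prop :=
  fun x => X x /\ 0 <= x < 2 * s.

Definition Tset (s : R) (X : R -> Prop) : R -> Prop :=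
  fun y => affS1 (1 / (1 + 2 * s)) 0 X y
        \/ affS1 (1 / (1 + 2 * s)) (1 / (1 + 2 * s)) (cap_arc s X) y.

Definition pi_s (s y : R) : R := mod1 ((1 + 2 * s) * y).

Definition eta (r r' y : R) : R := (1 + 2 * r) / (1 + 2 * r') * y.

Definition VR_face (Y : R -> Prop) (t : R) (sigma : list R) : Prop :=
  sigma <> nil /\ (forall x, In x sigma -> Y x) /\
  (forall x y, In x sigma -> In y sigma -> circ_dist x y <= t).

Definition Cech_face (X : R -> Prop) (s : R) (sigma : list R) : Prop :=
  sigma <> nil /\ (forall x, In x sigma -> X x) /\
  (exists c, onS1 c /\ forall x, In x sigma -> circ_dist x c <= s).

(* Main.v *)
Require Import Defs.
From Stdlib Require Import Reals Lra Lia List.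
Open Scope R_scope.

Lemma mod1_id z : 0 <= z < 1 -> mod1 z = z.
Proof.
intros [H0 H1]. unfold mod1. destruct (base_Int_part z) as [Ha Hb].
assert (Int_part z = 0%Z).
{ assert (IZR (Int_part z) < 1) by lra. assert (IZR (Int_part z) > -1) by lra.
  apply lt_IZR in H. apply lt_IZR in H2. lia. }
rewrite H. simpl. lra.
Qed.

Lemma mod1_range z : 0 <= mod1 z < 1.
Proof. unfold mod1. destruct (base_Int_part z) as [Ha Hb].
assert (H := up_tech). destruct (archimed z). 
split; [lra|].
assert (Int_part z = up z - 1)%Z by reflexivity.
rewrite H2, minus_IZR. simpl. lra. Qed.

Lemma dist_scale r r' d : 0 < r -> r <= r' -> r' < 1/2 -> 0 <= d < 1 ->
  Rmin d (1-d) <= 2*r/(1+2*r) ->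
  Rmin ((1+2*r)/(1+2*r') * d) (1 - (1+2*r)/(1+2*r') * d) <= 2*r'/(1+2*r').
Proof.
intros H0 H1 H2 Hd Hm.
set (A := 1+2*r) in *. set (B := 1+2*r') in *.
assert (HA : A > 0) by (unfold A; lra). assert (HB : B > 0) by (unfold B; lra).
assert (E1 : 2*r/A = 1 - 1/A) by (unfold A, B in *; field; lra).
assert (E2 : 2*r'/B = 1 - 1/B) by (unfold A, B in *; field; lra).
assert (E3 : A/B*d = (A*d)/B) by (unfold A, B in *; field; lra).
rewrite E3. unfold Rmin in Hm |- *.
destruct (Rle_dec d (1-d)).
- assert (A*d <= 2*r).
  { apply Rmult_le_compat_l with (r := A) in Hm; [|lra].
    replace (A*(2*r/A)) with (2*r) in Hm by (unfold A, B in *; field; lra). lra. }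
  destruct (Rle_dec (A*d/B) (1 - A*d/B)).
  + unfold Rdiv. apply Rmult_le_compat_r; [left; apply Rinv_0_lt_compat; lra| lra].
  + assert (A*d/B <= 2*r'/B).
    { unfold Rdiv. apply Rmult_le_compat_r; [left; apply Rinv_0_lt_compat; lra| lra]. }
    lra.
- assert (1 <= A*d).
  { assert (Q1 : 1 - d <= 1 - 1/A) by lra.
    assert (Q : 1/A <= d) by lra.
    apply Rmult_le_compat_l with (r := A) in Q; [|lra].
    replace (A*(1/A)) with 1 in Q by (unfold A, B in *; field; lra). lra. }
  assert (1/B <= A*d/B).
  { unfold Rdiv. apply Rmult_le_compat_r; [left; apply Rinv_0_lt_compat; lra| lra]. }
  destruct (Rle_dec (A*d/B) (1 - A*d/B)); lra.
Qed.

Lemma range_div A u : A > 0 -> 0 <= u < A -> 0 <= 1/A*u < 1.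
Proof. intros HA [H0 H1]. split.
- apply Rmult_le_pos; [left; unfold Rdiv; rewrite Rmult_1_l; apply Rinv_0_lt_compat|]; lra.
- replace 1 with (1/A*A) at 2 by (field; lra).
  apply Rmult_lt_compat_l; [unfold Rdiv; rewrite Rmult_1_l; apply Rinv_0_lt_compat|]; lra.
Qed.

Lemma Tset_range s X y : Tset s X y -> 0 <= y < 1.
Proof. intros [[x [_ ->]]|[x [_ ->]]]; apply mod1_range. Qed.

Lemma part1 X r r' : (forall x, X x -> onS1 x) ->
  0 < r -> r <= r' -> r' < 1 / 2 ->
  forall y, Tset r X y -> Tset r' X (eta r r' y).
Proof.
intros HX H0 H1 H2 y [[x [Hx ->]] | [x [[Hx [Hx1 Hx2]] ->]]];
  destruct (HX x Hx) as [Hx3 Hx4].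
- left. exists x. split; auto.
  rewrite !Rplus_0_r, !mod1_id.
  + unfold eta. field. lra.
  + apply range_div; lra.
  + apply range_div; lra.
- right. exists x. split; [split; [auto|lra]|].
  replace (1 / (1 + 2 * r) * x + 1 / (1 + 2 * r)) with (1 / (1 + 2 * r) * (x+1)) by (field; lra).
  replace (1 / (1 + 2 * r') * x + 1 / (1 + 2 * r')) with (1 / (1 + 2 * r') * (x+1)) by (field; lra).
  rewrite !mod1_id.
  + unfold eta. field. lra.
  + apply range_div; lra.
  + apply range_div; lra.
Qed.

Theorem proposition9p5 (X : R -> Prop) (r r' : R) :
  (forall x, X x -> onS1 x) ->
  0 < r -> r <= r' -> r' < 1 / 2 ->
  (* eta maps T_r(X) into T_{r'}(X) *)
  (forall y, Tset r X y -> Tset r' X (eta r r' y)) /\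
  (* eta is simplicial VR(T_r X; 2r/(1+2r)) -> VR(T_{r'} X; 2r'/(1+2r')) *)
  (forall sigma, VR_face (Tset r X) (2 * r / (1 + 2 * r)) sigma ->
     VR_face (Tset r' X) (2 * r' / (1 + 2 * r')) (map (eta r r') sigma)) /\
  (* the inclusion Cech(X;r) ⊆ Cech(X;r') *)
  (forall sigma, Cech_face X r sigma -> Cech_face X r' sigma) /\
  (* the square commutes: pi_{r'} o eta = pi_r on T_r(X) *)
  (forall y, Tset r X y -> pi_s r' (eta r r' y) = pi_s r y).
Proof.
intros HX H0 H1 H2.
split; [apply part1; auto|].
split; [|split].
- intros sigma [Hn [Hin Hd]]. split; [|split].
  + destruct sigma; simpl; [congruence|discriminate].
  + intros z Hz. apply in_map_iff in Hz. destruct Hz as [y [<- Hy]].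
    apply part1; auto.
  + intros z w Hz Hw. apply in_map_iff in Hz. destruct Hz as [y1 [<- Hy1]].
    apply in_map_iff in Hw. destruct Hw as [y2 [<- Hy2]].
    pose proof (Tset_range _ _ _ (Hin _ Hy1)). pose proof (Tset_range _ _ _ (Hin _ Hy2)).
    specialize (Hd _ _ Hy1 Hy2). unfold circ_dist in *.
    replace (Rabs (eta r r' y1 - eta r r' y2)) with ((1+2*r)/(1+2*r') * Rabs (y1 - y2)).
    * apply dist_scale; auto. split; [apply Rabs_pos|].
      unfold Rabs; destruct Rcase_abs; lra.
    * unfold eta. rewrite <- Rmult_minus_distr_l, Rabs_mult.
      f_equal. rewrite Rabs_right; auto.
      apply Rle_ge. unfold Rdiv. apply Rmult_le_pos; [lra|].
      left; apply Rinv_0_lt_compat; lra.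
- intros sigma [Hn [Hin [c [Hc Hcc]]]]. split; [auto|split; [auto|]].
  exists c. split; auto. intros x Hx. specialize (Hcc x Hx). lra.
- intros y _. unfold pi_s, eta. f_equal. field. lra.
Qed.
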